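(* Let $\mathcal G$ be an étale groupoid and $(Y,\Delta)$ a proper $\mathcal G$-simplicial complex satisfying hypotheses $(H_1)$ and $(H_2)$. Then the action of $\mathcal G$ on $|\Delta|$ is proper.
   Context: Étale groupoids are locally compact Hausdorff with range map a local homeomorphism. A $\mathcal G$-simplicial complex is a pair $(Y,\Delta)$ where $Y$ is a locally compact Hausdorff left $\mathcal G$-space whose anchor map $\rho:Y\to\mathcal G^{(0)}$ is a local homeomorphism and $\Delta$ is a family of finite nonempty subsets of $Y$ of bounded cardinality, each inside a fibre of $\rho$, closed under nonempty subsets and under $\delta\mapsto\gamma\delta$. It is proper if the $\mathcal G$-action on $Y$ is proper (i.e. $\mathcal G\ltimes Y$ is a proper groupoid). $|\Delta|=\{\mu\in P(Y):\mathrm{supp}(\mu)\in\Delta\}$, where $P(Y)$ is the space of positive Radon probability measures supported in a single fibre of $\rho$, with weak-$*$ topology from $C_c(Y,\mathbb R)$ and $\mathcal G$ acting by pushforward. $(H_1)$: for every compact $K\subseteq Y$, $\{y:\exists y'\in K,\{y,y'\}\in\Delta\}$ is compact. $(H_2)$: if nets $(y^{(i)}_\lambda)_\lambda$ converge to $y^{(i)}$ ($0\le i\le k$) and $\{y^{(0)}_\lambda,\dots,y^{(k)}_\lambda\}\in\Delta$ for all $\lambda$, then $\{y^{(0)},\dots,y^{(k)}\}\in\Delta$. *)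

(* Defs.v *)
From mathcomp Require Import all_boot all_algebra all_classical all_reals all_analysis.
Import numFieldNormedType.Exports.
Set Implicit Arguments.
Unset Strict Implicit.
Unset Printing Implicit Defensive.
Local Open Scope classical_set_scope.
Local Open Scope ring_scope.

Definition local_homeo {X T : topologicalType} (f : X -> T) (B : set T) : Prop :=
  continuous f /\ (forall x, B (f x)) /\
  forall x : X, exists U : set X, open U /\ U x /\
    (forall a b, U a -> U b -> f a = f b -> a = b) /\
    (forall W, open W -> W `<=` U -> exists V, open V /\ f @` W = V `&` B).

(* Topological groupoid G with unit space G0 (a subset of G), range r,
   source s, multiplication mul (meaningful on pairs with s g = r h) and
   inverse inv. *)
Definition topological_groupoid {G : topologicalType} (G0 : set G)
    (r s : G -> G) (mul : G -> G -> G) (inv : G -> G) : Prop :=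
  (forall g, G0 (r g) /\ G0 (s g)) /\
  (forall u, G0 u -> r u = u /\ s u = u) /\
  (forall g h, s g = r h -> r (mul g h) = r g /\ s (mul g h) = s h) /\
  (forall g h k, s g = r h -> s h = r k -> mul (mul g h) k = mul g (mul h k)) /\
  (forall g, mul (r g) g = g /\ mul g (s g) = g) /\
  (forall g, r (inv g) = s g /\ s (inv g) = r g /\
             mul g (inv g) = r g /\ mul (inv g) g = s g) /\
  continuous r /\ continuous s /\ continuous inv /\
  {within [set p : G * G | s p.1 = r p.2], continuous (fun p => mul p.1 p.2)}.

Definition etale_groupoid {G : topologicalType} (G0 : set G)
    (r s : G -> G) (mul : G -> G -> G) (inv : G -> G) : Prop :=
  topological_groupoid G0 r s mul inv /\ hausdorff_space G /\
  locally_compact [set: G] /\ local_homeo r G0.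

(* Locally compact Hausdorff left G-space Y with anchor map rho : Y -> G0
   a local homeomorphism; act g y is meaningful when s g = rho y. *)
Definition etale_G_space {G Y : topologicalType} (G0 : set G) (r s : G -> G)
    (mul : G -> G -> G) (rho : Y -> G) (act : G -> Y -> Y) : Prop :=
  hausdorff_space Y /\ locally_compact [set: Y] /\ local_homeo rho G0 /\
  (forall g y, s g = rho y -> rho (act g y) = r g) /\
  (forall g h y, s g = r h -> s h = rho y -> act (mul g h) y = act g (act h y)) /\
  (forall y, act (rho y) y = y) /\
  {within [set p : G * Y | s p.1 = rho p.2], continuous (fun p => act p.1 p.2)}.

(* Properness of an action on the set D of points of the space X (with the
   subspace topology), where comp g x says that (g,x) is composable:
   the groupoid D x| G is proper, i.e. the map (g,x) |-> (g x, x) from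
   the composable pairs to D x D is proper (inverse images of compact sets
   are compact). Compactness in a subspace = compactness in the ambient
   space. *)
Definition proper_action_on {G X : topologicalType} (D : set X)
    (comp : G -> X -> Prop) (act : G -> X -> X) : Prop :=
  forall K : set (X * X), K `<=` D `*` D -> compact K ->
    compact [set p : G * X | D p.2 /\ comp p.1 p.2 /\ K (act p.1 p.2, p.2)].

Definition G_simplicial_complex {G Y : topologicalType} (s : G -> G)
    (rho : Y -> G) (act : G -> Y -> Y) (Delta : set (set Y)) : Prop :=
  (exists N : nat, forall d, Delta d ->
     exists l : seq Y, (size l <= N)%N /\ d = [set y | y \in l]) /\
  (forall d, Delta d -> d !=set0) /\
  (forall d, Delta d -> forall y y', d y -> d y' -> rho y = rho y') /\
  (forall d d', Delta d -> d' `<=` d -> d' !=set0 -> Delta d') /\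
  (forall g d, Delta d -> (forall y, d y -> s g = rho y) -> Delta (act g @` d)).

Definition H1 {Y : topologicalType} (Delta : set (set Y)) : Prop :=
  forall K : set Y, compact K ->
    compact [set y | exists2 y', K y' & Delta [set y; y']].

Definition directed {I : Type} (le : I -> I -> Prop) : Prop :=
  (exists i : I, True) /\ (forall i, le i i) /\
  (forall i j k, le i j -> le j k -> le i k) /\
  (forall i j, exists k, le i k /\ le j k).

Definition net_cvg {I : Type} (le : I -> I -> Prop) {Y : topologicalType}
    (x : I -> Y) (y : Y) : Prop :=
  forall U, nbhs y U -> exists i0, forall i, le i0 i -> U (x i).

Definition H2 {Y : topologicalType} (Delta : set (set Y)) : Prop :=
  forall (I : Type) (le : I -> I -> Prop), directed le ->
  forall (k : nat) (x : 'I_k.+1 -> I -> Y) (y : 'I_k.+1 -> Y),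
    (forall i, net_cvg le (x i) (y i)) ->
    (forall l, Delta [set x i l | i in [set: 'I_k.+1]]) ->
    Delta [set y i | i in [set: 'I_k.+1]].

(* Finitely supported positive measures mu = sum_y w y * delta_y on Y,
   encoded by their weight function w. *)
Definition supp {Y : topologicalType} {R : realType} (w : Y -> R) : set Y :=
  [set y | w y != 0].

Definition Cc (R : realType) (Y : topologicalType) :=
  {f : Y -> R | continuous f /\ compact (closure [set y | f y != 0])}.

Definition integ {Y : topologicalType} {R : realType} (w : Y -> R) (f : Y -> R) : R :=
  \sum_(y \in supp w) w y * f y.

Definition meas_emb (R : realType) (Y : topologicalType) (w : Y -> R)
  : {ptws Cc R Y -> R} := fun f => integ w (sval f).

(* Space of (finitely supported) measures with the weak-* topology induced
   by C_c(Y, R). *)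
Notation Meas R Y := (initial_topology (@meas_emb R Y)).

Definition realization (R : realType) {Y : topologicalType}
    (Delta : set (set Y)) : set (Meas R Y) :=
  fun w : Y -> R => (forall y, 0 <= w y) /\ Delta (supp w) /\
                    \sum_(y \in supp w) w y = 1.

Definition push {G : Type} {Y : topologicalType} {R : realType}
    (act : G -> Y -> Y) (g : G) (w : Meas R Y) : Meas R Y :=
  fun y' : Y => \sum_(y \in [set y | w y != 0 /\ act g y = y']) w y.

Definition meas_comp {G Y : topologicalType} {R : realType} (s : G -> G)
    (rho : Y -> G) (g : G) (w : Meas R Y) : Prop :=
  forall y, supp w y -> s g = rho y.

(* Main.v *)
Require Import Defs.
From mathcomp Require Import all_boot all_algebra all_classical all_reals all_analysis.
Import numFieldNormedType.Exports.
Local Open Scope classical_set_scope.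

Section Helpers.
Set Implicit Arguments.
Unset Strict Implicit.
Unset Printing Implicit Defensive.
Import GRing.Theory Num.Theory.
Local Open Scope ring_scope.

Lemma bump (R : realType) (Y : topologicalType) (hY : hausdorff_space Y)
  (lcY : locally_compact [set: Y]) (y : Y) (O : set Y) :
  open O -> O y -> exists f : Cc R Y,
    sval f y = 1 /\ (forall x, 0 <= sval f x <= 1) /\
    (forall x, sval f x != 0 -> O x).
Proof.
move=> oO Oy.
have [U] := lcY y I; rewrite withinET => Uy [cU clU].
set B := ~` (O `&` U°).
have clB : closed B by rewrite closedC; apply: openI => //; exact: open_interior.
have nBy : ~ B y.
  by rewrite /B => /(_ (conj Oy Uy)) .
have cr := @locally_compact_completely_regular Y R lcY hY.
have sep := cr y B clB nBy.
pose u := Urysohn (R:=R) [set y] B.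
have uc : continuous u := @Urysohn_continuous _ R _ _.
have ur := @Urysohn_range _ R [set y] B.
have u0 := @Urysohn_sub0 _ R _ _ sep.
have u1 := @Urysohn_sub1 _ R _ _ sep.
have fsupp : forall x, 1 - u x != 0 -> (O `&` U°) x.
  move=> x; apply: contraNP => nx.
  have -> : u x = 1 by apply: u1; exists x.
  by rewrite subrr.
have fc : continuous (fun x => 1 - u x).
  move=> x; apply: cvgB; [exact: cvg_cst| exact: uc].
have fcc : compact (closure [set x | 1 - u x != 0]).
  refine (@subclosed_compact Y _ U (@closed_closure _ _) cU _).
  rewrite [X in _ `<=` X](closure_id U).1 //.
  apply: closureS => x /fsupp [_ /interior_subset]//.
exists (exist _ (fun x => 1 - u x) (conj fc fcc)); split => /=.
  have -> : u y = 0 by apply: u0; exists y.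
  by rewrite subr0.
split; last by move=> x /fsupp [].
move=> x; have /ur : range u (u x) by exists x.
rewrite /= in_itv /= => /andP [h0 h1].
by rewrite subr_ge0 h1 /= lerBlDr lerDl.
Qed.
Lemma integ_list (R : realType) (Y : topologicalType) (w h : Y -> R) (l : seq Y) :
  uniq l -> supp w `<=` [set` l] -> integ w h = \sum_(y <- l) w y * h y.
Proof.
move=> ul sl; rewrite /integ (fsbig_fwiden l) //.
move=> y [_ ny] /=; have -> : w y = 0.
  by apply/eqP; apply: contra_notT ny.
by rewrite mul0r.
Qed.

Lemma push_list (R : realType) (G Y : topologicalType) (act : G -> Y -> Y)
  (g : G) (w : Y -> R) (l : seq Y) y' :
  uniq l -> supp w `<=` [set` l] ->
  push act g w y' = \sum_(y <- l | act g y == y') w y.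
Proof.
move=> ul sl; rewrite /push.
have -> : [set y | w y != 0 /\ act g y = y'] = supp w `&` [set y | act g y = y'] by [].
rewrite fsbig_mkcondr (fsbig_fwiden l) //; last first.
  move=> y [_ ny] /=; case: ifP => // _.
  by apply/eqP; apply: contra_notT ny.
rewrite [RHS]big_mkcond; apply: eq_bigr => y _.
case: ifPn => [/set_mem /= ->|/negP hn]; first by rewrite eqxx.
by case: eqP => // e; exfalso; apply: hn; exact/mem_set.
Qed.

Lemma integ_push (R : realType) (G Y : topologicalType) (act : G -> Y -> Y)
  (g : G) (w h : Y -> R) (l : seq Y) :
  uniq l -> supp w `<=` [set` l] ->
  integ (push act g w) h = \sum_(y <- l) w y * h (act g y).
Proof.
move=> ul sl.
set r := undup (map (act g) l).
have ur : uniq r by exact: undup_uniq.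
have sr : supp (push act g w) `<=` [set` r].
  move=> y' /=; rewrite /supp /= (push_list _ _ _ ul sl) => nz.
  have : has (fun y => act g y == y') l.
    apply: contraNT nz => /negbTE nh; rewrite big_hasC //; by rewrite nh.
  case/hasP => y yl /eqP <-; by rewrite mem_undup map_f.
rewrite (integ_list _ ur sr).
under eq_bigr do rewrite (push_list _ _ _ ul sl) big_distrl /= big_mkcond /=.
rewrite (exchange_big _ r l xpredT xpredT).
apply: eq_big_seq => y yl.
have yr : act g y \in r by rewrite mem_undup map_f.
rewrite (bigD1_seq (act g y)) //= eqxx big1 ?addr0 //.
by move=> y' /negbTE; rewrite eq_sym => ->.
Qed.

Lemma avoid_list (Y : topologicalType) (hY : hausdorff_space Y) (l : seq Y) (y : Y) :
  exists Ov : set Y, open Ov /\ Ov y /\ forall x, x \in l -> x != y -> ~ Ov x.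
Proof.
elim: l => [|x l [Ov [oO [Oy hO]]]].
  exists setT; split; first exact: openT.
  by split.
have [exy|nxy] := eqVneq x y.
  exists Ov; split => //; split => // z; rewrite inE => /orP [/eqP -> |]; first by rewrite exy eqxx.
  exact: hO.
have cx : closed [set x] by apply: accessible_closed_set1; apply: hausdorff_accessible.
exists (Ov `&` ~` [set x]); split; first by apply: openI => //; rewrite openC.
split; first by split => // /= exy; move: nxy; rewrite exy eqxx.
move=> z; rewrite inE => /orP [/eqP -> _ [_ hx]|zl zy [Oz _]].
  by apply: hx.
exact: (hO z zl zy Oz).
Qed.

Lemma sep_meas (R : realType) (Y : topologicalType) (hY : hausdorff_space Y)
  (lcY : locally_compact [set: Y]) (w1 w2 : Y -> R) (l : seq Y) :
  uniq l -> supp w1 `<=` [set` l] -> supp w2 `<=` [set` l] ->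
  (forall f : Cc R Y, integ w1 (sval f) = integ w2 (sval f)) -> w1 = w2.
Proof.
move=> ul s1 s2 hf; apply/funext => y.
have [yl|nyl] := boolP (y \in l); last first.
  have z : forall w : Y -> R, supp w `<=` [set` l] -> w y = 0.
    by move=> w sw; apply/eqP; apply: contraNT nyl => /sw.
  by rewrite (z _ s1) (z _ s2).
have [Ov [oO [Oy hO]]] := avoid_list hY l y.
have [f [f1 [_ fO]]] := bump R hY lcY oO Oy.
have ev : forall w : Y -> R, supp w `<=` [set` l] -> integ w (sval f) = w y.
  move=> w sw; rewrite (integ_list _ ul sw) (bigD1_seq y) //= f1 mulr1 big1 ?addr0 //.
  move=> x xy; have [xl|nxl] := boolP (x \in l).
    have -> : sval f x = 0.
      by apply/eqP; apply: contraT => /fO h; exfalso; exact: (hO x xl xy h).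
    by rewrite mulr0.
  have -> : w x = 0 by apply/eqP; apply: contraNT nxl => /sw.
  by rewrite mul0r.
by rewrite -(ev _ s1) -(ev _ s2) hf.
Qed.

Lemma sum_pad (R : realType) (T : Type) (F : T -> R) (l : seq T) (x0 : T) (N : nat) :
  (size l <= N)%N ->
  \sum_(y <- l) F y = \sum_(i < N) (if (i < size l)%N then F (nth x0 l i) else 0).
Proof.
move=> hN; rewrite (big_nth x0) big_mkord.
rewrite (big_ord_widen N (fun i => F (nth x0 l i)) hN).
by rewrite big_mkcond.
Qed.

Lemma integ_pos (R : realType) (Y : topologicalType) (w h : Y -> R) (l : seq Y) y :
  uniq l -> supp w `<=` [set` l] -> (forall x, 0 <= w x) -> (forall x, 0 <= h x) ->
  w y != 0 -> 0 < h y -> 0 < integ w h.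
Proof.
move=> ul sl w0 h0 wy hy; rewrite (integ_list _ ul sl).
have yl : y \in l by exact: sl.
rewrite (bigD1_seq y) //=; apply: ltr_pwDl.
  by apply: mulr_gt0 => //; rewrite lt0r wy w0.
by apply: sumr_ge0 => x _; apply: mulr_ge0.
Qed.

Lemma integ_nz (R : realType) (Y : topologicalType) (w h : Y -> R) :
  integ w h != 0 -> exists y, supp w y /\ h y != 0.
Proof.
move=> nz; case: (pselect (exists y, supp w y /\ h y != 0)) => // hn.
exfalso; move/eqP: nz; apply.
rewrite /integ fsbig1 // => y sy.
have : h y = 0 by apply/eqP; apply: contra_notT hn => hy; exists y.
by move=> ->; rewrite mulr0.
Qed.

Lemma push_pos (R : realType) (G Y : topologicalType) (act : G -> Y -> Y)
  (g : G) (w : Y -> R) (l : seq Y) y :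
  uniq l -> supp w `<=` [set` l] -> (forall x, 0 <= w x) -> w y != 0 ->
  push act g w (act g y) != 0.
Proof.
move=> ul sl w0 wy; rewrite (push_list _ _ _ ul sl).
have yl : y \in l by exact: sl.
rewrite big_mkcond (bigD1_seq y) //= eqxx.
apply: lt0r_neq0; apply: ltr_pwDl; first by rewrite lt0r wy w0.
by apply: sumr_ge0 => x _; case: ifP.
Qed.

Lemma push_supp (R : realType) (G Y : topologicalType) (act : G -> Y -> Y)
  (g : G) (w : Y -> R) (l : seq Y) :
  uniq l -> supp w `<=` [set` l] ->
  supp (push act g w) `<=` [set` undup (map (act g) l)].
Proof.
move=> ul sl y' /=; rewrite /supp /= (push_list _ _ _ ul sl) => nz.
have : has (fun y => act g y == y') l.
  apply: contraNT nz => /negbTE nh; rewrite big_hasC //; by rewrite nh.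
case/hasP => y yl /eqP <-; by rewrite mem_undup map_f.
Qed.

Definition comb (R : realType) (Y : topologicalType) (I : finType) (z : I -> Y)
  (al : I -> R) : Y -> R := fun y => \sum_(i | z i == y) al i.

Lemma comb_supp (R : realType) (Y : topologicalType) (I : finType) (z : I -> Y)
  (al : I -> R) : supp (comb z al) `<=` [set` undup (map z (enum I))].
Proof.
move=> y /=; rewrite /supp /comb /= => nz.
have : has (fun i => z i == y) (index_enum I).
  by apply: contraNT nz => /negbTE nh; rewrite big_hasC // nh.
case/hasP => i il /eqP <-; by rewrite mem_undup map_f // mem_enum.
Qed.

Lemma integ_comb (R : realType) (Y : topologicalType) (I : finType) (z : I -> Y)
  (al : I -> R) (h : Y -> R) : integ (comb z al) h = \sum_i al i * h (z i).
Proof.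
set r := undup (map z (enum I)).
have ur : uniq r by exact: undup_uniq.
rewrite (integ_list _ ur (@comb_supp R Y I z al)).
rewrite /comb.
under eq_bigr do rewrite big_distrl /= big_mkcond /=.
rewrite (exchange_big _ r (index_enum I) xpredT xpredT).
apply: eq_bigr => i _.
have ir : z i \in r by rewrite mem_undup map_f // mem_enum.
rewrite (bigD1_seq (z i)) //= eqxx big1 ?addr0 //.
by move=> y' /negbTE; rewrite eq_sym => ->.
Qed.

Lemma cvg_sumL (R : realType) (T : Type) (F : set_system T) (FF : Filter F)
  (I : Type) (r : seq I) (f : I -> T -> R) (a : I -> R) :
  (forall i, f i @ F --> a i) ->
  (fun x => \sum_(i <- r) f i x) @ F --> \sum_(i <- r) a i.
Proof.
move=> hf; elim: r => [|i r IH].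
  rewrite big_nil; under eq_cvg do rewrite big_nil; exact: cvg_cst.
rewrite big_cons; under eq_cvg do rewrite big_cons.
exact: cvgD.
Qed.

Lemma within_cvg (T : Type) (X Z : topologicalType) (U : set_system T)
  (FU : Filter U) (A : set X) (f : X -> Z) (m : T -> X) (x : X) :
  {within A, continuous f} -> A x -> m @ U --> x -> U (m @^-1` A) ->
  (f \o m) @ U --> f x.
Proof.
move=> /subspace_continuousP hc Ax mx UA.
have := hc x Ax; apply: cvg_trans.
move=> B hB; move: (mx _ hB) => /= Um.
have H := @filterI T U FU _ _ UA Um.
suff : U ((f \o m) @^-1` B) by [].
apply: (@filterS _ U FU _ _ _ H) => t [a b]; exact: b a.
Qed.
Lemma evalc_cont (I : Type) (T : topologicalType) (i : I) :
  continuous (fun f : {ptws I -> T} => f i).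
Proof.
move=> f; have /cvg_sup/(_ i)/cvg_image : f --> f by apply: cvg_id.
move=> h; apply: cvg_trans (h _) => {h}.
  by move=> Q /= [W nbdW <-]; apply: filterS nbdW; exact: preimage_image.
rewrite eqEsubset; split => y //; by exists (fun=> y).
Qed.

Lemma integ_cont (R : realType) (Y : topologicalType) (f : Cc R Y) :
  continuous (fun w : Meas R Y => integ w (sval f)).
Proof.
move=> w.
have h1 := @initial_continuous _ _ (@meas_emb R Y) w.
have h2 := @evalc_cont (Cc R Y) R f (meas_emb w).
exact: (continuous_comp h1 h2).
Qed.
Lemma weight_le1 (R : realType) (Y : topologicalType) (w : Y -> R) (l : seq Y) y :
  (forall x, 0 <= w x) -> uniq l -> supp w `<=` [set` l] ->
  \sum_(x \in supp w) w x = 1 -> w y <= 1.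
Proof.
move=> w0 ul sl s1.
have [wy|wy] := eqVneq (w y) 0; first by rewrite wy.
have yl : y \in l by exact: sl.
move: s1; rewrite (fsbig_fwiden l) //; last first.
  by move=> x [_ nx] /=; apply/eqP; apply: contra_notT nx.
rewrite (bigD1_seq y) //= => <-; rewrite lerDl.
by apply: sumr_ge0.
Qed.

Lemma event_supp (R : realType) (Y : topologicalType) (hY : hausdorff_space Y)
  (lcY : locally_compact [set: Y]) (Delta : set (set Y))
  (Hne : forall d, Delta d -> d !=set0)
  (Hsub : forall d d', Delta d -> d' `<=` d -> d' !=set0 -> Delta d')
  (hH1 : H1 Delta)
  (Hfin : forall w : Meas R Y, realization Delta w ->
     exists l, uniq l /\ supp w `<=` [set` l])
  (T : Type) (U : set_system T) (FU : Filter U) (m : T -> Meas R Y)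
  (mu : Meas R Y) :
  realization Delta mu -> m @ U --> mu -> U [set t | realization Delta (m t)] ->
  exists C, compact C /\ U [set t | supp (m t) `<=` C].
Proof.
move=> rmu hm Ur.
have [mu0 [Dmu _]] := rmu.
have [y1 sy1] := Hne _ Dmu.
have [V] := lcY y1 I; rewrite withinET => Vy [cV clV].
have [f [f1 [f01 fO]]] := bump R hY lcY (@open_interior _ V) Vy.
have [l [ul sl]] := Hfin mu rmu.
have f0 : forall x, 0 <= sval f x by move=> x; have /andP[] := f01 x.
have pos : 0 < integ mu (sval f).
  by apply: (integ_pos ul sl mu0 f0 sy1); rewrite f1.
have cv := continuous_cvg _ (@integ_cont R Y f mu) hm.
have Upos : U [set t | 0 < integ (m t) (sval f)].
  have h : nbhs (integ mu (sval f)) [set x : R | 0 < x].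
    by apply: open_nbhs_nbhs; split => //; exact: open_gt.
  by move: (cv FU _ h).
exists [set y | exists2 y', V y' & Delta [set y; y']]; split; first exact: hH1.
apply: (@filterS _ U FU _ _ _ (@filterI T U FU _ _ Upos Ur)).
move=> t [pt [_ [Dt _]]] y sy.
have [y' [sy' fy']] := integ_nz (lt0r_neq0 pt).
exists y'; first exact: interior_subset (fO _ fy').
apply: (Hsub _ _ Dt); last by exists y; left.
by move=> z [->|->].
Qed.
Lemma cvg_snd_comp (A B : topologicalType) (T : Type) (U : set_system T) (FU : Filter U) (m : T -> A * B) (a : A) (b : B) :
  m @ U --> (a, b) -> (fun t => (m t).2) @ U --> b.
Proof.
move=> h. apply: (cvg_comp _ _ h). exact: cvg_snd.
Qed.
Lemma cvg_pair_comp (A B : topologicalType) (T : Type) (U : set_system T) (FU : Filter U) (m : T -> A * B) (a : A) (b : B) :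
  (fun t => (m t).1) @ U --> a -> (fun t => (m t).2) @ U --> b -> m @ U --> (a, b).
Proof.
move=> h1 h2. have := cvg_pair h1 h2. 
have -> : (fun x => ((m x).1, (m x).2)) = m by apply/funext => x; case: (m x).
move=> h P0 hP0; apply: h; exact: hP0.
Qed.
Lemma fst_cont (A B : topologicalType) : continuous (@fst A B).
Proof. move=> p. exact: cvg_fst. Qed.

Lemma ultra_compact_cvg (T : Type) (X : topologicalType) (U : set_system T)
  (f : T -> X) (A : set X) : UltraFilter U -> compact A ->
  U (f @^-1` A) -> exists2 p, A p & f @ U --> p.
Proof.
move=> UU cA UA.
have [p [Ap cp]] := cA (f @ U) _ UA.
exists p => // N Np.
have [//|UC] := in_ultra_setVsetC (f @^-1` N) UU.
have /set0P/eqP := cp (~` N) N UC Np.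
by rewrite setICl.
Qed.

Lemma cvg_fst_comp (A B : topologicalType) (T : Type) (U : set_system T) (FU : Filter U) (m : T -> A * B) (a : A) (b : B) :
  m @ U --> (a, b) -> (fun t => (m t).1) @ U --> a.
Proof.
move=> h. apply: (cvg_comp _ _ h). exact: cvg_fst.
Qed.

End Helpers.

From mathcomp Require Import order.
Import Order.TTheory GRing.Theory Num.Theory.

Theorem proposition3p24 (R : realType) (G : topologicalType) (G0 : set G)
    (r s : G -> G) (mul : G -> G -> G) (inv : G -> G)
    (Y : topologicalType) (rho : Y -> G) (act : G -> Y -> Y)
    (Delta : set (set Y)) :
  etale_groupoid G0 r s mul inv ->
  etale_G_space G0 r s mul rho act ->
  G_simplicial_complex s rho act Delta ->
  proper_action_on [set: Y] (fun g y => s g = rho y) act ->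
  H1 Delta -> H2 Delta ->
  proper_action_on (realization (R:=R) Delta) (meas_comp s rho) (push act).
Proof.
move=> [tg [hG [lcG lhr]]] [hY [lcY [[crho _] [hanch [hassoc [hunit cact]]]]]].
move=> [[N HN] [Hne [Hfib [Hsub Hact]]]] Hprop hH1 _.
have cs : continuous s by case: tg => [_ [_ [_ [_ [_ [_ [_ [cs _]]]]]]]].
move=> K KD cK.
rewrite compact_ultra => U UU UP.
Local Open Scope ring_scope.
have Hfin : forall w : Meas R Y, realization Delta w ->
    exists l, uniq l /\ supp w `<=` [set` l].
  move=> w [_ [Dw _]]; have [l [_ e]] := HN _ Dw; exists (undup l); split.
    exact: undup_uniq.
  by move=> y; rewrite e /= mem_undup.
have Lex : forall w : Meas R Y, exists l : seq Y, realization Delta w ->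
    [/\ uniq l, (size l <= N)%N, supp w = [set` l] & l != [::]].
  move=> w; case: (pselect (realization Delta w)) => [[w0 [Dw s1]]|nr]; last first.
    by exists [::].
  have [l [sz e]] := HN _ Dw; exists (undup l) => _; split.
  - exact: undup_uniq.
  - exact: leq_trans (size_undup l) sz.
  - by rewrite e; apply/funext => y /=; rewrite mem_undup.
  - have [y sy] := Hne _ Dw; move: sy; rewrite e /= => yl.
    by apply/eqP => h; move: yl; rewrite -mem_undup h.
pose L w := projT1 (cid (Lex w)).
have hL : forall w, realization Delta w ->
    [/\ uniq (L w), (size (L w) <= N)%N, supp w = [set` L w] & L w != [::]].
  by move=> w; exact: (projT2 (cid (Lex w))).
have UK : U ((fun p : G * Meas R Y => (push act p.1 p.2, p.2)) @^-1` K).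
  by apply: filterS UP => p [_ [_ kp]].
have [[nu mu] Knm hPhi] := ultra_compact_cvg UU cK UK.
have [rnu rmu] := KD _ Knm.
have hsnd : (fun p : G * Meas R Y => p.2) @ U --> mu.
  exact: (cvg_snd_comp _ hPhi).
have hpush : (fun p : G * Meas R Y => push act p.1 p.2) @ U --> nu.
  exact: (cvg_fst_comp _ hPhi).
have UR : U [set p : G * Meas R Y | realization Delta p.2].
  by apply: filterS UP => p [].
have URp : U [set p : G * Meas R Y | realization Delta (push act p.1 p.2)].
  by apply: filterS UP => p [_ [_ /KD []]].
have [C1 [cC1 UC1]] := event_supp hY lcY Hne Hsub hH1 Hfin _ rmu hsnd UR.
have [C2 [cC2 UC2]] := event_supp hY lcY Hne Hsub hH1 Hfin _ rnu hpush URp.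
have UPC : U [set p : G * Meas R Y | (realization Delta p.2 /\
      meas_comp s rho p.1 p.2 /\ K (push act p.1 p.2, p.2)) /\
      supp p.2 `<=` C1 /\ supp (push act p.1 p.2) `<=` C2].
  apply: filterS (filterI UP (filterI UC1 UC2)) => p [h1 [h2 h3]].
  by split.
have cQ := Hprop (C2 `*` C1) (fun _ _ => conj I I) (compact_setX cC2 cC1).
have cA := continuous_compact (continuous_subspaceT (@fst_cont G Y)) cQ.
have UA : U ((fun p : G * Meas R Y => p.1) @^-1` (fst @` [set p : G * Y |
    [set: Y] p.2 /\ s p.1 = rho p.2 /\ (C2 `*` C1) (act p.1 p.2, p.2)])).
  apply: filterS UPC => -[g w] /= [[rw [cw _]] [sC1 sC2]].
  have [w0 [Dw _]] := rw.
  have [y sy] := Hne _ Dw.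
  have [l [ul sl]] := Hfin _ rw.
  exists (g, y) => //; split => //; split; first exact: cw.
  split => /=; last exact: sC1.
  by apply: sC2; exact: (push_pos act g ul sl w0 sy).
have [g0 Ag0 hfst] := ultra_compact_cvg UU cA UA.
have [y1 _] := Hne _ rmu.2.1.
pose e (w : Meas R Y) (i : 'I_N) := nth (head y1 (L w)) (L w) i.
pose a (w : Meas R Y) (i : 'I_N) :=
  if (i < size (L w))%N then w (nth (head y1 (L w)) (L w) i) else 0.
have Ein : forall w, realization Delta w -> forall i, supp w (e w i).
  move=> w rw i; have [_ _ -> nl] := hL w rw; rewrite /= /e.
  have [lt|ge] := ltnP i (size (L w)); first exact: mem_nth.
  rewrite nth_default //; case: (L w) nl => //= x l' _.
  by rewrite inE eqxx.
have Aab : forall w, realization Delta w -> forall i, 0 <= a w i <= 1.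
  move=> w rw i; have [ul _ sl _] := hL w rw; have [w0 [_ s1]] := rw.
  rewrite /a; case: ifP => _; last by rewrite lexx ler01.
  rewrite w0 /=; apply: (weight_le1 _ w0 ul _ s1).
  by rewrite sl.
have Irep : forall w, realization Delta w -> forall h,
    integ w h = \sum_(i < N) a w i * h (e w i).
  move=> w rw h; have [ul sz sl _] := hL w rw.
  have ss : supp w `<=` [set` L w] by rewrite sl.
  rewrite (integ_list _ ul ss) (sum_pad _ (head y1 (L w)) sz).
  apply: eq_bigr => i _; rewrite /a /e; case: ifP => _ //.
  by rewrite mul0r.
have Prep : forall w, realization Delta w -> forall g h,
    integ (push act g w) h = \sum_(i < N) a w i * h (act g (e w i)).
  move=> w rw g h; have [ul sz sl _] := hL w rw.
  have ss : supp w `<=` [set` L w] by rewrite sl.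
  rewrite (integ_push _ _ _ ul ss) (sum_pad _ (head y1 (L w)) sz).
  apply: eq_bigr => i _; rewrite /a /e; case: ifP => _ //.
  by rewrite mul0r.
have hz : forall i : 'I_N, exists z : Y,
    C1 z /\ (fun p : G * Meas R Y => e p.2 i) @ U --> z.
  move=> i; have UE : U ((fun p : G * Meas R Y => e p.2 i) @^-1` C1).
    by apply: filterS UPC => p [[rp _] [sC1 _]]; apply: sC1; exact: Ein.
  by have [z Cz hz] := ultra_compact_cvg UU cC1 UE; exists z.
have ha : forall i : 'I_N, exists al : R,
    (fun p : G * Meas R Y => a p.2 i) @ U --> al.
  move=> i; have UE : U ((fun p : G * Meas R Y => a p.2 i) @^-1` `[0, 1]%classic).
    apply: filterS UR => p rp /=; rewrite in_itv /=; exact: Aab.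
  by have [al _ hal] := ultra_compact_cvg UU (@segment_compact R 0 1) UE; exists al.
have [z hz'] := choice hz.
have [al hal] := choice ha.
have PU : ProperFilter U by exact: ultra_proper.
have FU : Filter U by exact: PU.
have comp_lim : forall i, s g0 = rho (z i).
  move=> i.
  have h1 := continuous_cvg FU (cs g0) hfst.
  have h2 := continuous_cvg FU (crho (z i)) (hz' i).2.
  have ev : \forall p \near U, s p.1 = rho (e p.2 i).
    by apply: filterS UPC => p [[rp [cp _]] _]; exact: cp _ (Ein _ rp i).
  have h3 := cvg_trans (near_eq_cvg ev) h1.
  have PF : ProperFilter ((fun p : G * Meas R Y => rho (e p.2 i)) @ U) by exact: fmap_proper_filter.
  exact: (@cvg_unique G hG _ PF (s g0) (rho (z i)) (h3 FU) h2).
have lim_mu : forall f : Cc R Y,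
    integ mu (sval f) = \sum_(i < N) al i * sval f (z i).
  move=> f.
  have h1 := continuous_cvg FU (@integ_cont R Y f mu) hsnd.
  have h2 : (fun p : G * Meas R Y => \sum_(i < N) a p.2 i * sval f (e p.2 i))
      @ U --> \sum_(i < N) al i * sval f (z i).
    apply: cvg_sumL => i.
    apply: (@cvgM _ _ _ FU (fun p : G * Meas R Y => a p.2 i)
      (fun p : G * Meas R Y => sval f (e p.2 i))); first exact: hal.
    exact: (continuous_cvg FU (proj1 (svalP f) (z i)) (hz' i).2).
  have ev : \forall p \near U,
      integ p.2 (sval f) = \sum_(i < N) a p.2 i * sval f (e p.2 i).
    by apply: filterS UR => p rp; exact: Irep.
  have h3 := cvg_trans (near_eq_cvg ev) h1.
  have PF : ProperFilter ((fun p : G * Meas R Y =>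
      \sum_(i < N) a p.2 i * sval f (e p.2 i)) @ U) by exact: fmap_proper_filter.
  exact: (@cvg_unique _ (@Rhausdorff R) _ PF _ _ (h3 FU) h2).
have lim_nu : forall f : Cc R Y,
    integ nu (sval f) = \sum_(i < N) al i * sval f (act g0 (z i)).
  move=> f.
  have h1 := continuous_cvg FU (@integ_cont R Y f nu) hpush.
  have h2 : (fun p : G * Meas R Y =>
      \sum_(i < N) a p.2 i * sval f (act p.1 (e p.2 i)))
      @ U --> \sum_(i < N) al i * sval f (act g0 (z i)).
    apply: cvg_sumL => i.
    apply: (@cvgM _ _ _ FU (fun p : G * Meas R Y => a p.2 i)
      (fun p : G * Meas R Y => sval f (act p.1 (e p.2 i)))); first exact: hal.
    have hm := @cvg_pair_comp G Y _ U FU (fun p => (p.1, e p.2 i)) g0 (z i)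
      hfst (hz' i).2.
    have UAc : U ((fun p : G * Meas R Y => (p.1, e p.2 i)) @^-1`
        [set q : G * Y | s q.1 = rho q.2]).
      by apply: filterS UPC => p [[rp [cp _]] _]; exact: cp _ (Ein _ rp i).
    have hact := within_cvg FU cact (comp_lim i : [set q : G * Y | s q.1 = rho q.2] (g0, z i)) hm UAc.
    exact: (continuous_cvg FU (proj1 (svalP f) (act g0 (z i))) hact).
  have ev : \forall p \near U, integ (push act p.1 p.2) (sval f) =
      \sum_(i < N) a p.2 i * sval f (act p.1 (e p.2 i)).
    by apply: filterS UR => p rp; exact: Prep.
  have h3 := cvg_trans (near_eq_cvg ev) h1.
  have PF : ProperFilter ((fun p : G * Meas R Y =>
      \sum_(i < N) a p.2 i * sval f (act p.1 (e p.2 i))) @ U)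
    by exact: fmap_proper_filter.
  exact: (@cvg_unique _ (@Rhausdorff R) _ PF _ _ (h3 FU) h2).
have [ulm _ slm _] := hL mu rmu.
have ssm : supp mu `<=` [set` L mu] by rewrite slm.
have emu : mu = comb z al.
  apply: (@sep_meas R Y hY lcY mu (comb z al)
    (undup (L mu ++ undup (map z (enum 'I_N))))).
  - exact: undup_uniq.
  - by move=> y /ssm /= sy; rewrite mem_undup mem_cat sy.
  - by move=> y /(@comb_supp R Y _ z al) /= sy; rewrite mem_undup mem_cat sy orbT.
  - by move=> f; rewrite lim_mu integ_comb.
have enu : nu = push act g0 mu.
  have [uln _ sln _] := hL nu rnu.
  have ssn : supp nu `<=` [set` L nu] by rewrite sln.
  apply: (@sep_meas R Y hY lcY nu (push act g0 mu)
    (undup (L nu ++ undup (map (act g0) (L mu))))).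
  - exact: undup_uniq.
  - by move=> y /ssn /= sy; rewrite mem_undup mem_cat sy.
  - by move=> y /(@push_supp R G Y act g0 mu _ ulm ssm) /= sy; rewrite mem_undup mem_cat sy orbT.
  - move=> f; rewrite lim_nu (integ_push _ _ _ ulm ssm).
    have -> : \sum_(y <- L mu) mu y * sval f (act g0 y) =
        integ mu (fun y => sval f (act g0 y)) by rewrite (integ_list _ ulm ssm).
    by rewrite emu integ_comb.
exists (g0, mu); split.
  split; first exact: rmu.
  split.
    move=> y /=; rewrite emu => /(@comb_supp R Y _ z al) /=.
    rewrite mem_undup => /mapP [i _ ->]; exact: comp_lim.
  by rewrite /= -enu.
exact: (@cvg_pair_comp G (Meas R Y) _ U FU id g0 mu hfst hsnd).
Qed.
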